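(* Let $(X,d)$ be a geodesic space such that $\operatorname{Curv}_{loc}X\le 0$ and such that for every triangle $(a_1,a_2,a_3)$ in $X$ the circumradius is attained, i.e. there is $m\in X$ with $\max_i d(m,a_i)=r(a_1,a_2,a_3)$. If $(X,d)$ is a Busemann space, then $\operatorname{Curv} X\leq 0$.
   Context: A geodesic space is a metric space in which any two points $x,y$ are joined by a geodesic, i.e. a path $\gamma\colon[0,1]\to X$ with $\gamma(0)=x,\gamma(1)=y$ and $d(\gamma(s),\gamma(t))=d(x,y)|s-t|$. A geodesic space is Busemann if for all geodesics $\gamma,\eta\colon[0,1]\to X$ the function $t\mapsto d(\gamma(t),\eta(t))$ is convex. A triangle is a triple $(a_1,a_2,a_3)$ of points of $X$; a comparison triangle is a triple $(\bar a_1,\bar a_2,\bar a_3)$ in $\mathbb{R}^2$ with $\|\bar a_i-\bar a_j\|=d(a_i,a_j)$. The circumradius is $r(a_1,a_2,a_3)=\inf_{x\in X}\max_i d(x,a_i)$, and $r(\bar a_1,\bar a_2,\bar a_3)=\min_{x\in\mathbb{R}^2}\max_i\|x-\bar a_i\|$. $\operatorname{Curv}X\le0$ means $r(a_1,a_2,a_3)\le r(\bar a_1,\bar a_2,\bar a_3)$ for every triangle in $X$. $\operatorname{Curv}_{loc}X\le0$ means that every $x\in X$ has a neighborhood $U$ such that this inequality holds for all triangles with vertices in $U$. *)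

(* Defs.v *)
From Stdlib Require Import Reals.
From Coquelicot Require Import Coquelicot.
Open Scope R_scope.

Section Defs.
Context {T : Type} (d : T -> T -> R).

Definition is_metric : Prop :=
  (forall x y, 0 <= d x y) /\
  (forall x y, d x y = 0 <-> x = y) /\
  (forall x y, d x y = d y x) /\
  (forall x y z, d x z <= d x y + d y z).

Definition geodesic (x y : T) (g : R -> T) : Prop :=
  g 0 = x /\ g 1 = y /\
  forall s t, 0 <= s <= 1 -> 0 <= t <= 1 ->
    d (g s) (g t) = d x y * Rabs (s - t).

Definition geodesic_space : Prop :=
  forall x y, exists g, geodesic x y g.

Definition busemann : Prop :=
  forall x y x' y' (g h : R -> T), geodesic x y g -> geodesic x' y' h ->
    forall s t l, 0 <= s <= 1 -> 0 <= t <= 1 -> 0 <= l <= 1 ->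
      d (g ((1 - l) * s + l * t)) (h ((1 - l) * s + l * t))
        <= (1 - l) * d (g s) (h s) + l * d (g t) (h t).

Definition max3 (u v w : R) : R := Rmax (Rmax u v) w.

Definition circumradius (a1 a2 a3 : T) : R :=
  real (Glb_Rbar (fun r => exists x, r = max3 (d x a1) (d x a2) (d x a3))).

Definition ball (x : T) (e : R) : T -> Prop := fun y => d x y < e.
End Defs.

Definition eucl (p q : R * R) : R :=
  sqrt ((fst p - fst q) ^ 2 + (snd p - snd q) ^ 2).

(** circumradius in R^2: min_{x in R^2} max_i ||x - b_i|| (as infimum; it is attained) *)
Definition circumradius_R2 (b1 b2 b3 : R * R) : R := circumradius eucl b1 b2 b3.

Definition comparison_triangle {T : Type} (d : T -> T -> R) (a1 a2 a3 : T)
  (b1 b2 b3 : R * R) : Prop :=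
  eucl b1 b2 = d a1 a2 /\ eucl b1 b3 = d a1 a3 /\ eucl b2 b3 = d a2 a3.

Definition CAT0_triangle {T : Type} (d : T -> T -> R) (a1 a2 a3 : T) : Prop :=
  forall b1 b2 b3, comparison_triangle d a1 a2 a3 b1 b2 b3 ->
    circumradius d a1 a2 a3 <= circumradius_R2 b1 b2 b3.

Definition curv_nonpos {T : Type} (d : T -> T -> R) : Prop :=
  forall a1 a2 a3, CAT0_triangle d a1 a2 a3.

Definition curv_loc_nonpos {T : Type} (d : T -> T -> R) : Prop :=
  forall x, exists U : T -> Prop,
    (exists e, 0 < e /\ forall y, ball d x e y -> U y) /\
    forall a1 a2 a3, U a1 -> U a2 -> U a3 -> CAT0_triangle d a1 a2 a3.

Definition circumradius_attained {T : Type} (d : T -> T -> R) : Prop :=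
  forall a1 a2 a3, exists m, max3 (d m a1) (d m a2) (d m a3) = circumradius d a1 a2 a3.

(* Main.v *)
Require Import Defs.
From Stdlib Require Import Reals.
From Coquelicot Require Import Coquelicot.
From Stdlib Require Import Lra Psatz.
Open Scope R_scope.

Lemma glb_props {U : Type} (f : U -> R) (x0 : U) (Hf : forall x, 0 <= f x) :
  (forall x, real (Glb_Rbar (fun r => exists x, r = f x)) <= f x) /\
  (forall rho, (forall x, rho <= f x) -> rho <= real (Glb_Rbar (fun r => exists x, r = f x))).
Proof.
  destruct (Glb_Rbar_correct (fun r => exists x, r = f x)) as [Hlb Hglb].
  destruct (Glb_Rbar (fun r => exists x, r = f x)) as [g| |] eqn:E.
  - split.
    + intros x. specialize (Hlb (f x) (ex_intro _ x eq_refl)). exact Hlb.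
    + intros rho Hr. specialize (Hglb (Finite rho)).
      simpl in Hglb. apply Hglb. intros y [x ->]. simpl. apply Hr.
  - exfalso. specialize (Hlb (f x0) (ex_intro _ x0 eq_refl)). exact Hlb.
  - exfalso. specialize (Hglb (Finite 0)). simpl in Hglb. apply Hglb.
    intros y [x ->]. simpl. apply Hf.
Qed.

Lemma max3_l u v w : u <= max3 u v w.
Proof. unfold max3. eapply Rle_trans; [apply Rmax_l|apply Rmax_l]. Qed.
Lemma max3_m u v w : v <= max3 u v w.
Proof. unfold max3. eapply Rle_trans; [apply Rmax_r|apply Rmax_l]. Qed.
Lemma max3_r u v w : w <= max3 u v w.
Proof. unfold max3. apply Rmax_r. Qed.
Lemma max3_lub u v w z : u <= z -> v <= z -> w <= z -> max3 u v w <= z.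
Proof. intros. unfold max3. apply Rmax_lub; auto. apply Rmax_lub; auto. Qed.

Definition sq (p q : R * R) : R := (fst p - fst q) ^ 2 + (snd p - snd q) ^ 2.
Lemma sq_ge0 p q : 0 <= sq p q.
Proof. unfold sq. apply Rplus_le_le_0_compat; apply pow2_ge_0. Qed.
Lemma eucl_sq p q : eucl p q ^ 2 = sq p q.
Proof. unfold eucl. apply pow2_sqrt. apply sq_ge0. Qed.
Lemma eucl_ge0 p q : 0 <= eucl p q.
Proof. unfold eucl. apply sqrt_pos. Qed.

Lemma nums (A B C : R) : 0 <= A -> 0 <= B -> 0 <= C ->
  exists m1 m2 m3, 0 <= m1 /\ 0 <= m2 /\ 0 <= m3 /\ m1 + m2 + m3 = 1 /\
   let W := m1*m2*C + m1*m3*B + m2*m3*A in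
   m2*C + m3*B <= 2*W /\ m1*C + m3*A <= 2*W /\ m1*B + m2*A <= 2*W.
Proof.
  intros HA HB HC.
  destruct (Rle_lt_dec (B+C) A) as [h1|h1].
  { exists 0, (1/2), (1/2). simpl. repeat split; lra. }
  destruct (Rle_lt_dec (A+C) B) as [h2|h2].
  { exists (1/2), 0, (1/2). simpl. repeat split; lra. }
  destruct (Rle_lt_dec (A+B) C) as [h3|h3].
  { exists (1/2), (1/2), 0. simpl. repeat split; lra. }
  assert (pA : 0 < A) by lra. assert (pB : 0 < B) by lra. assert (pC : 0 < C) by lra.
  set (n1 := A*(B+C-A)). set (n2 := B*(A+C-B)). set (n3 := C*(A+B-C)).
  assert (q1 : 0 < n1) by (unfold n1; apply Rmult_lt_0_compat; lra).
  assert (q2 : 0 < n2) by (unfold n2; apply Rmult_lt_0_compat; lra).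
  assert (q3 : 0 < n3) by (unfold n3; apply Rmult_lt_0_compat; lra).
  set (S := n1 + n2 + n3).
  assert (qS : 0 < S) by (unfold S; lra).
  exists (n1/S), (n2/S), (n3/S).
  repeat split.
  - apply Rlt_le, Rdiv_lt_0_compat; lra.
  - apply Rlt_le, Rdiv_lt_0_compat; lra.
  - apply Rlt_le, Rdiv_lt_0_compat; lra.
  - unfold S. field. lra.
  - apply Req_le. unfold S, n1, n2, n3 in *. field. lra.
  - apply Req_le. unfold S, n1, n2, n3 in *. field. lra.
  - apply Req_le. unfold S, n1, n2, n3 in *. field. lra.
Qed.

Definition bary (m1 m2 m3 : R) (c1 c2 c3 : R * R) : R * R :=
  (m1 * fst c1 + m2 * fst c2 + m3 * fst c3, m1 * snd c1 + m2 * snd c2 + m3 * snd c3).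

Definition Wt (m1 m2 m3 : R) (c1 c2 c3 : R * R) : R :=
  m1*m2*sq c1 c2 + m1*m3*sq c1 c3 + m2*m3*sq c2 c3.

Lemma bary_sq (c1 c2 c3 : R * R) m1 m2 m3 : m1 + m2 + m3 = 1 ->
  sq (bary m1 m2 m3 c1 c2 c3) c1 = m2*sq c1 c2 + m3*sq c1 c3 - Wt m1 m2 m3 c1 c2 c3 /\
  sq (bary m1 m2 m3 c1 c2 c3) c2 = m1*sq c1 c2 + m3*sq c2 c3 - Wt m1 m2 m3 c1 c2 c3 /\
  sq (bary m1 m2 m3 c1 c2 c3) c3 = m1*sq c1 c3 + m2*sq c2 c3 - Wt m1 m2 m3 c1 c2 c3.
Proof.
  intros hs.
  destruct c1 as [x1 y1]; destruct c2 as [x2 y2]; destruct c3 as [x3 y3];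
  unfold Wt, bary, sq; simpl.
  replace m3 with (1 - m1 - m2) by lra. repeat split; ring.
Qed.

Lemma center (c1 c2 c3 : R * R) : exists m1 m2 m3,
  0 <= m1 /\ 0 <= m2 /\ 0 <= m3 /\ m1 + m2 + m3 = 1 /\
  sq (bary m1 m2 m3 c1 c2 c3) c1 <= Wt m1 m2 m3 c1 c2 c3 /\
  sq (bary m1 m2 m3 c1 c2 c3) c2 <= Wt m1 m2 m3 c1 c2 c3 /\
  sq (bary m1 m2 m3 c1 c2 c3) c3 <= Wt m1 m2 m3 c1 c2 c3.
Proof.
  destruct (nums (sq c2 c3) (sq c1 c3) (sq c1 c2) (sq_ge0 _ _) (sq_ge0 _ _) (sq_ge0 _ _))
    as (m1 & m2 & m3 & h1 & h2 & h3 & hs & k1 & k2 & k3).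
  exists m1, m2, m3.
  destruct (bary_sq c1 c2 c3 m1 m2 m3 hs) as (e1 & e2 & e3).
  rewrite e1, e2, e3. unfold Wt in *.
  repeat split; auto; lra.
Qed.

Lemma conv_bound (b1 b2 b3 q : R * R) m1 m2 m3 :
  0 <= m1 -> 0 <= m2 -> 0 <= m3 -> m1 + m2 + m3 = 1 ->
  Wt m1 m2 m3 b1 b2 b3 <= m1 * sq q b1 + m2 * sq q b2 + m3 * sq q b3.
Proof.
  intros h1 h2 h3 hs.
  destruct b1 as [x1 y1]; destruct b2 as [x2 y2]; destruct b3 as [x3 y3];
  destruct q as [u v]; unfold Wt, sq; simpl.
  replace m3 with (1 - m1 - m2) by lra.
  set (px := m1*x1+m2*x2+(1-m1-m2)*x3). set (py := m1*y1+m2*y2+(1-m1-m2)*y3).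
  assert (E : m1 * ((u - x1) ^ 2 + (v - y1) ^ 2) + m2 * ((u - x2) ^ 2 + (v - y2) ^ 2) +
     (1 - m1 - m2) * ((u - x3) ^ 2 + (v - y3) ^ 2) -
     (m1 * m2 * ((x1 - x2) ^ 2 + (y1 - y2) ^ 2) + m1 * (1 - m1 - m2) * ((x1 - x3) ^ 2 + (y1 - y3) ^ 2) +
      m2 * (1 - m1 - m2) * ((x2 - x3) ^ 2 + (y2 - y3) ^ 2)) = (u - px)^2 + (v - py)^2)
    by (unfold px, py; ring).
  pose proof (pow2_ge_0 (u - px)); pose proof (pow2_ge_0 (v - py)); lra.
Qed.

Lemma sqrt_le_sq x y : 0 <= y -> x <= y ^ 2 -> sqrt x <= y.
Proof. intros hy h. rewrite <- (sqrt_pow2 y hy). apply sqrt_le_1_alt. exact h. Qed.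

Lemma plane_scale (b1 b2 b3 c1 c2 c3 : R * R) (t : R) : 0 < t ->
  eucl c1 c2 <= t * eucl b1 b2 -> eucl c1 c3 <= t * eucl b1 b3 ->
  eucl c2 c3 <= t * eucl b2 b3 ->
  circumradius_R2 c1 c2 c3 <= t * circumradius_R2 b1 b2 b3.
Proof.
  intros ht h12 h13 h23.
  destruct (center c1 c2 c3) as (m1 & m2 & m3 & hm1 & hm2 & hm3 & hs & k1 & k2 & k3).
  set (p := bary m1 m2 m3 c1 c2 c3) in *.
  assert (sqle : forall c c' b b', eucl c c' <= t * eucl b b' -> sq c c' <= t^2 * sq b b').
  { intros c c' b b' h. rewrite <- !eucl_sq.
    replace (t ^ 2 * eucl b b' ^ 2) with ((t * eucl b b') ^ 2) by ring.
    apply pow_incr. split; [apply eucl_ge0|exact h]. }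
  assert (key : forall q, max3 (eucl p c1) (eucl p c2) (eucl p c3) <=
                         t * max3 (eucl q b1) (eucl q b2) (eucl q b3)).
  { intro q. set (M := max3 (eucl q b1) (eucl q b2) (eucl q b3)).
    assert (hM : 0 <= M) by (eapply Rle_trans; [apply eucl_ge0|apply max3_l]).
    assert (Wle : Wt m1 m2 m3 c1 c2 c3 <= t^2 * Wt m1 m2 m3 b1 b2 b3).
    { unfold Wt. pose proof (sqle _ _ _ _ h12). pose proof (sqle _ _ _ _ h13).
      pose proof (sqle _ _ _ _ h23).
      assert (0 <= m1*m2) by nra. assert (0 <= m1*m3) by nra. assert (0 <= m2*m3) by nra.
      nra. }
    assert (sqM : forall b, eucl q b <= M -> sq q b <= M^2).
    { intros b hb. rewrite <- eucl_sq. apply pow_incr. split; [apply eucl_ge0|exact hb]. }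
    pose proof (sqM b1 (max3_l _ _ _)). pose proof (sqM b2 (max3_m _ _ _)).
    pose proof (sqM b3 (max3_r _ _ _)).
    pose proof (conv_bound b1 b2 b3 q m1 m2 m3 hm1 hm2 hm3 hs).
    assert (WbM : Wt m1 m2 m3 b1 b2 b3 <= M^2) by nra.
    assert (0 <= t^2) by nra.
    assert (fin : Wt m1 m2 m3 c1 c2 c3 <= (t*M)^2).
    { replace ((t*M)^2) with (t^2 * M^2) by ring. nra. }
    assert (0 <= t * M) by nra.
    apply max3_lub; unfold eucl; apply sqrt_le_sq; auto; fold (sq p c1); fold (sq p c2);
      fold (sq p c3); lra. }
  unfold circumradius_R2, circumradius.
  destruct (glb_props (fun x => max3 (eucl x c1) (eucl x c2) (eucl x c3)) c1) as [lc _].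
  { intros x. eapply Rle_trans; [apply eucl_ge0|apply max3_l]. }
  destruct (glb_props (fun x => max3 (eucl x b1) (eucl x b2) (eucl x b3)) b1) as [_ gb].
  { intros x. eapply Rle_trans; [apply eucl_ge0|apply max3_l]. }
  set (rc := real (Glb_Rbar (fun r => exists x, r = max3 (eucl x c1) (eucl x c2) (eucl x c3)))) in *.
  assert (H : rc / t <= real (Glb_Rbar (fun r => exists x, r = max3 (eucl x b1) (eucl x b2) (eucl x b3)))).
  { apply gb. intros q. specialize (lc p). specialize (key q).
    apply (Rmult_le_reg_l t); auto. unfold Rdiv. rewrite <- Rmult_assoc.
    rewrite (Rmult_comm t rc), Rmult_assoc, Rinv_r, Rmult_1_r by lra. lra. }
  apply (Rmult_le_compat_l t) in H; [|lra].
  unfold Rdiv in H. rewrite (Rmult_comm rc), <- Rmult_assoc, Rinv_r, Rmult_1_l in H by lra.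
  exact H.
Qed.

Lemma realize l12 l13 l23 : 0 <= l12 -> 0 <= l13 -> 0 <= l23 ->
  l23 <= l12 + l13 -> l12 <= l13 + l23 -> l13 <= l12 + l23 ->
  exists c1 c2 c3 : R * R, eucl c1 c2 = l12 /\ eucl c1 c3 = l13 /\ eucl c2 c3 = l23.
Proof.
  intros h1 h2 h3 t1 t2 t3.
  destruct (Req_dec l12 0) as [z|nz].
  { exists (0,0), (0,0), (l13, 0). unfold eucl; cbn [fst snd].
    assert (l23 = l13) by lra. subst. repeat split.
    - replace ((0 - 0) ^ 2 + (0 - 0) ^ 2) with (0 ^ 2) by ring. apply sqrt_pow2; lra.
    - replace ((0 - l13) ^ 2 + (0 - 0) ^ 2) with (l13 ^ 2) by ring. apply sqrt_pow2; lra.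
    - replace ((0 - l13) ^ 2 + (0 - 0) ^ 2) with (l13 ^ 2) by ring. apply sqrt_pow2; lra. }
  assert (pu : 0 < l12) by lra.
  set (x := (l12^2 + l13^2 - l23^2) / (2 * l12)).
  assert (hx : 2 * l12 * x = l12^2 + l13^2 - l23^2) by (unfold x; field; lra).
  assert (xu : x <= l13).
  { apply (Rmult_le_reg_l (2*l12)); [lra|]. rewrite hx. nra. }
  assert (xl : - l13 <= x).
  { apply (Rmult_le_reg_l (2*l12)); [lra|]. rewrite hx. nra. }
  assert (hy : 0 <= l13^2 - x^2) by nra.
  set (y := sqrt (l13^2 - x^2)).
  assert (y2 : y^2 = l13^2 - x^2) by (unfold y; apply pow2_sqrt; exact hy).
  exists (0,0), (l12, 0), (x, y). unfold eucl; cbn [fst snd]. repeat split.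
  - replace ((0 - l12) ^ 2 + (0 - 0) ^ 2) with (l12 ^ 2) by ring. apply sqrt_pow2; lra.
  - replace ((0 - x) ^ 2 + (0 - y) ^ 2) with (l13 ^ 2) by nra. apply sqrt_pow2; lra.
  - replace ((l12 - x) ^ 2 + (0 - y) ^ 2) with (l23 ^ 2) by nra. apply sqrt_pow2; lra.
Qed.

Theorem mainTheorem5 (T : Type) (d : T -> T -> R) :
  is_metric d -> geodesic_space d -> curv_loc_nonpos d ->
  circumradius_attained d -> busemann d -> curv_nonpos d.
Proof.
  intros Hm Hg Hloc Hatt Hbus a1 a2 a3 b1 b2 b3 Hcomp.
  destruct Hm as (Hpos & Hzero & Hsym & Htri).
  assert (dxx : forall x, d x x = 0) by (intro x; apply Hzero; reflexivity).
  destruct (Hatt a1 a2 a3) as [m Hmr].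
  set (r := circumradius d a1 a2 a3) in *.
  assert (mi1 : d m a1 <= r) by (rewrite <- Hmr; apply max3_l).
  assert (mi2 : d m a2 <= r) by (rewrite <- Hmr; apply max3_m).
  assert (mi3 : d m a3 <= r) by (rewrite <- Hmr; apply max3_r).
  assert (r0 : 0 <= r) by (pose proof (Hpos m a1); lra).
  destruct (glb_props (fun x => max3 (d x a1) (d x a2) (d x a3)) a1) as [lbX _].
  { intros x. eapply Rle_trans; [apply Hpos|apply max3_l]. }
  change (forall x, r <= max3 (d x a1) (d x a2) (d x a3)) in lbX.
  destruct (Hloc m) as [U [[e [he hU]] HU]].
  set (t := e / (e + 2 * r + 1)).
  assert (te : t * (e + 2 * r + 1) = e) by (unfold t; field; lra).
  assert (tp : 0 < t) by (unfold t; apply Rdiv_lt_0_compat; lra).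
  assert (t1 : t <= 1) by nra.
  assert (rte : r * t < e) by nra.
  destruct (Hg m a1) as [g1 G1]. destruct (Hg m a2) as [g2 G2]. destruct (Hg m a3) as [g3 G3].
  assert (I01 : 0 <= 0 <= 1) by lra. assert (I11 : 0 <= 1 <= 1) by lra.
  assert (It : 0 <= t <= 1) by lra.
  assert (geo : forall a g, geodesic d m a g -> d m (g t) = d m a * t /\ d (g t) a = d m a * (1 - t)).
  { intros a g [g0 [g1' gd]]. split.
    - pose proof (gd 0 t I01 It) as E. rewrite g0 in E. rewrite E.
      rewrite Rabs_left1 by lra. ring.
    - pose proof (gd t 1 It I11) as E. rewrite g1' in E. rewrite E.
      rewrite Rabs_left1 by lra. ring. }
  destruct (geo a1 g1 G1) as [e1 f1]. destruct (geo a2 g2 G2) as [e2 f2].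
  destruct (geo a3 g3 G3) as [e3 f3].
  set (p1 := g1 t) in *. set (p2 := g2 t) in *. set (p3 := g3 t) in *.
  assert (side : forall a a' g g', geodesic d m a g -> geodesic d m a' g' ->
            d (g t) (g' t) <= t * d a a').
  { intros a a' g g' G G'. pose proof (Hbus m a m a' g g' G G' 0 1 t I01 I11 It) as B.
    replace ((1 - t) * 0 + t * 1) with t in B by ring.
    destruct G as [G0 [G1' _]]. destruct G' as [G0' [G1'' _]].
    rewrite G0, G0', G1', G1'', dxx in B. lra. }
  pose proof (side _ _ _ _ G1 G2) as s12. pose proof (side _ _ _ _ G1 G3) as s13.
  pose proof (side _ _ _ _ G2 G3) as s23. fold p1 p2 p3 in s12, s13, s23.
  assert (U1 : U p1) by (apply hU; change (d m p1 < e); rewrite e1; assert (d m a1 * t <= r * t) by (apply Rmult_le_compat_r; lra); lra).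
  assert (U2 : U p2) by (apply hU; change (d m p2 < e); rewrite e2; assert (d m a2 * t <= r * t) by (apply Rmult_le_compat_r; lra); lra).
  assert (U3 : U p3) by (apply hU; change (d m p3 < e); rewrite e3; assert (d m a3 * t <= r * t) by (apply Rmult_le_compat_r; lra); lra).
  destruct (glb_props (fun x => max3 (d x p1) (d x p2) (d x p3)) p1) as [_ gbP].
  { intros x. eapply Rle_trans; [apply Hpos|apply max3_l]. }
  assert (lowP : t * r <= circumradius d p1 p2 p3).
  { apply gbP. intros x. specialize (lbX x).
    assert (max3 (d x a1) (d x a2) (d x a3) <= max3 (d x p1) (d x p2) (d x p3) + (1 - t) * r).
    { apply max3_lub.
      - pose proof (Htri x p1 a1). pose proof (max3_l (d x p1) (d x p2) (d x p3)). nra.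
      - pose proof (Htri x p2 a2). pose proof (max3_m (d x p1) (d x p2) (d x p3)). nra.
      - pose proof (Htri x p3 a3). pose proof (max3_r (d x p1) (d x p2) (d x p3)). nra. }
    lra. }
  destruct (realize (d p1 p2) (d p1 p3) (d p2 p3) (Hpos _ _) (Hpos _ _) (Hpos _ _))
    as (c1 & c2 & c3 & ec12 & ec13 & ec23).
  { pose proof (Htri p2 p1 p3). rewrite (Hsym p2 p1) in H. lra. }
  { pose proof (Htri p1 p3 p2). rewrite (Hsym p3 p2) in H. lra. }
  { pose proof (Htri p1 p2 p3). lra. }
  assert (Cp : comparison_triangle d p1 p2 p3 c1 c2 c3) by (repeat split; auto).
  pose proof (HU p1 p2 p3 U1 U2 U3 c1 c2 c3 Cp) as Hc.
  destruct Hcomp as (eb12 & eb13 & eb23).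
  assert (PS : circumradius_R2 c1 c2 c3 <= t * circumradius_R2 b1 b2 b3).
  { apply plane_scale; auto; [rewrite ec12, eb12|rewrite ec13, eb13|rewrite ec23, eb23]; auto. }
  assert (t * r <= t * circumradius_R2 b1 b2 b3) by lra.
  apply (Rmult_le_reg_l t); auto.
Qed.
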